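(* Let $k$ be a finite extension of $\mathbb{Q}_p$ and let $L$ be a finite-dimensional nonabelian reductive Lie algebra over $k$. If $L$ is CA, then $L$ is simple of $k$-rank at most $1$.
   Context: A Lie algebra is CA if the centralizer of each of its nonzero elements is abelian. The $k$-rank of a semisimple Lie algebra over $k$ is the dimension of any of its maximal split toral subalgebras. *)

(* Defs.v *)
From HB Require Import structures.
From mathcomp Require Import all_boot all_order all_algebra.
Set Implicit Arguments. Unset Strict Implicit. Unset Printing Implicit Defensive.
Import Order.TTheory GRing.Theory Num.Theory.
Local Open Scope ring_scope.

(* A field k is a finite extension of Q_p iff it carries a valuation  *)
(* v (values in Q, normalised by v(p) = 1) extending the p-adic       *)
(* valuation of Q, k is complete for v, and k is finite-dimensional   *)
(* over the closure of Q in k (that closure is Q_p = the completion   *)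
(* of Q at p).                                                        *)

Section Padic.
Variables (p : nat) (k : fieldType) (v : k -> rat).

Definition v_converges (u : nat -> k) (l : k) : Prop :=
  forall N : rat, exists M : nat, forall n : nat, (M <= n)%N ->
    u n = l \/ N <= v (u n - l).

Definition v_cauchy (u : nat -> k) : Prop :=
  forall N : rat, exists M : nat, forall m n : nat, (M <= m)%N -> (M <= n)%N ->
    u m = u n \/ N <= v (u m - u n).

Definition padic_valuation : Prop :=
  [/\ forall x y : k, x != 0 -> y != 0 -> v (x * y) = v x + v y,
      forall x y : k, x != 0 -> y != 0 -> x + y != 0 ->
        Num.min (v x) (v y) <= v (x + y)
    & forall n : nat, (0 < n)%N -> v (n%:R) = (logn p n)%:R].

Definition v_complete : Prop :=
  forall u : nat -> k, v_cauchy u -> exists l, v_converges u l.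

Definition in_Qp (x : k) : Prop :=
  exists u : nat -> rat, v_converges (fun n => ratr (u n)) x.

Definition finite_over_Qp : Prop :=
  exists s : seq k, forall x : k, exists c : nat -> k,
    (forall i, in_Qp (c i)) /\ x = \sum_(i < size s) c i * s`_i.
End Padic.

Definition finite_ext_Qp (p : nat) (k : fieldType) : Prop :=
  [pchar k] =i pred0 /\
  exists v : k -> rat,
    [/\ padic_valuation p v, v_complete v & finite_over_Qp v].

Section Lie.
Variables (k : fieldType) (L : vectType k) (br : L -> L -> L).

Definition is_lie_bracket : Prop :=
  [/\ forall (a : k) (x y z : L), br (a *: x + y) z = a *: br x z + br y z,
      forall (a : k) (x y z : L), br z (a *: x + y) = a *: br z x + br z y,
      forall x : L, br x x = 0
    & forall x y z : L, br x (br y z) + br y (br z x) + br z (br x y) = 0].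

Definition lie_abelian : Prop := forall x y : L, br x y = 0.

(* centralizer of x is abelian for every nonzero x *)
Definition lie_CA : Prop :=
  forall x : L, x != 0 -> forall y z : L, br x y = 0 -> br x z = 0 -> br y z = 0.

Definition lie_ideal (I : {vspace L}) : Prop :=
  forall x y : L, y \in I -> br x y \in I.

Definition lie_subalgebra (U : {vspace L}) : Prop :=
  forall x y : L, x \in U -> y \in U -> br x y \in U.

(* reductive: the adjoint representation is completely reducible,
   i.e. every ideal has a complementary ideal *)
Definition lie_reductive : Prop :=
  forall I : {vspace L}, lie_ideal I ->
    exists J : {vspace L}, [/\ lie_ideal J, (I + J)%VS = fullv & (I :&: J)%VS = 0%VS].

Definition lie_simple : Prop :=
  ~ lie_abelian /\
  forall I : {vspace L}, lie_ideal I -> I = 0%VS \/ I = fullv.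

Definition ad_split (t : L) : Prop :=
  exists s : seq L, <<s>>%VS = fullv /\
    forall e, e \in s -> exists a : k, br t e = a *: e.

Definition split_toral (T : {vspace L}) : Prop :=
  lie_subalgebra T /\ forall t, t \in T -> ad_split t.

Definition max_split_toral (T : {vspace L}) : Prop :=
  split_toral T /\
  forall T' : {vspace L}, split_toral T' -> (T <= T')%VS -> T' = T.

(* k-rank at most 1: (every, equivalently any) maximal split toral
   subalgebra has dimension <= 1 *)
Definition krank_le1 : Prop :=
  forall T : {vspace L}, max_split_toral T -> (\dim T <= 1)%N.
End Lie.

(* Main.v *)
Require Import Defs.
From HB Require Import structures.
From mathcomp Require Import all_boot all_order all_algebra.
Set Implicit Arguments. Unset Strict Implicit. Unset Printing Implicit Defensive.
Import Order.TTheory GRing.Theory Num.Theory.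
Local Open Scope ring_scope.

Lemma lin0 (k : fieldType) (L : vectType k) (D : L -> L)
  (HD : forall (a : k) x y, D (a *: x + y) = a *: D x + D y) : D 0 = 0.
Proof.
have := HD 1 0 0; rewrite !scale1r !addr0 => H.
by apply: (addrI (D 0)); rewrite addr0 -H.
Qed.

Lemma linD (k : fieldType) (L : vectType k) (D : L -> L)
  (HD : forall (a : k) x y, D (a *: x + y) = a *: D x + D y) x y : D (x + y) = D x + D y.
Proof. by have := HD 1 x y; rewrite !scale1r. Qed.

Lemma linZ (k : fieldType) (L : vectType k) (D : L -> L)
  (HD : forall (a : k) x y, D (a *: x + y) = a *: D x + D y) a x : D (a *: x) = a *: D x.
Proof. by have := HD a x 0; rewrite addr0 (lin0 HD) addr0. Qed.

Lemma linN (k : fieldType) (L : vectType k) (D : L -> L)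
  (HD : forall (a : k) x y, D (a *: x + y) = a *: D x + D y) x : D (- x) = - D x.
Proof. by rewrite -scaleN1r (linZ HD) scaleN1r. Qed.

Lemma linB (k : fieldType) (L : vectType k) (D : L -> L)
  (HD : forall (a : k) x y, D (a *: x + y) = a *: D x + D y) x y : D (x - y) = D x - D y.
Proof. by rewrite (linD HD) (linN HD). Qed.

Lemma linS (k : fieldType) (L : vectType k) (D : L -> L)
  (HD : forall (a : k) x y, D (a *: x + y) = a *: D x + D y) n (F : 'I_n -> L) :
  D (\sum_i F i) = \sum_i D (F i).
Proof. exact: (big_morph D (linD HD) (lin0 HD)). Qed.

Lemma br_anti (k : fieldType) (L : vectType k) (br : L -> L -> L) :
  is_lie_bracket br -> forall x y, br x y = - br y x.
Proof.
case=> Hl Hr Hxx _ x y.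
have Hl' : forall z, forall (a : k) x y, (fun w => br w z) (a *: x + y) = a *: (fun w => br w z) x + (fun w => br w z) y by move=> z a u v /=; apply: Hl.
have Hr' : forall z, forall (a : k) u v, br z (a *: u + v) = a *: br z u + br z v by move=> z a u v; apply: Hr.
have := Hxx (x + y).
rewrite (linD (Hl' (x + y))) /= (linD (Hr' x)) (linD (Hr' y)) !Hxx add0r addr0.
by move=> H; apply/eqP; rewrite -addr_eq0 H.
Qed.

Fixpoint Pop (k : fieldType) (L : vectType k) (D : L -> L) (bs : seq k) (x : L) : L :=
  match bs with [::] => x | c :: bs' => Pop D bs' (D x - c *: x) end.

Lemma Pop_lin (k : fieldType) (L : vectType k) (D : L -> L)
  (HD : forall (a : k) x y, D (a *: x + y) = a *: D x + D y) bs :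
  forall (a : k) x y, Pop D bs (a *: x + y) = a *: Pop D bs x + Pop D bs y.
Proof.
elim: bs => [//|c bs IH] a x y /=.
rewrite -IH HD; congr (Pop D bs _).
by rewrite scalerDr scalerBr !scalerA mulrC opprD addrACA.
Qed.

Lemma Pop_eig (k : fieldType) (L : vectType k) (D : L -> L)
  (HD : forall (a : k) x y, D (a *: x + y) = a *: D x + D y) bs f b :
  D f = b *: f -> b \in bs -> Pop D bs f = 0.
Proof.
move=> Hf; elim: bs => [//|c bs IH] /=; rewrite inE Hf -scalerBl.
rewrite (linZ (Pop_lin HD bs)).
case/orP => [/eqP ->|/IH ->]; first by rewrite subrr scale0r.
by rewrite scaler0.
Qed.

Lemma Pop_nil (k : fieldType) (L : vectType k) (D : L -> L)
  (HD : forall (a : k) x y, D (a *: x + y) = a *: D x + D y) bs z :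
  D z = 0 -> 0 \notin bs -> Pop D bs z = 0 -> z = 0.
Proof.
move=> Hz; elim: bs => [//|c bs IH] /=; rewrite inE negb_or => /andP[c0 nb].
rewrite Hz sub0r -scaleNr (linZ (Pop_lin HD bs)) => /eqP.
rewrite scaler_eq0 oppr_eq0 eq_sym (negPf c0) /= => /eqP; exact: IH.
Qed.

Lemma Pop_extract (k : fieldType) (L : vectType k) (D : L -> L) (Q : L -> Prop)
  (HQ : forall c w, Q w -> Q (D w - c *: w)) bs :
  forall w, Q w -> w != 0 -> Pop D bs w = 0 ->
  exists2 w', Q w' /\ w' != 0 & exists2 c, c \in bs & D w' = c *: w'.
Proof.
elim: bs => [|c bs IH] w Qw wn0 /=; first by move=> w0; rewrite w0 eqxx in wn0.
have [e0|en0] := eqVneq (D w - c *: w) 0.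
  move=> _; exists w => //; exists c; first by rewrite inE eqxx.
  by apply/eqP; rewrite -subr_eq0 e0.
move=> /(IH _ (HQ c w Qw) en0) [w' Hw' [c' Hc' Hd]].
by exists w' => //; exists c' => //; rewrite inE Hc' orbT.
Qed.

Lemma Pop_kill (k : fieldType) (L : vectType k) (D : L -> L)
  (HD : forall (a : k) x y, D (a *: x + y) = a *: D x + D y) (s : seq L) :
  <<s>>%VS = fullv -> (forall e, e \in s -> exists a : k, D e = a *: e) ->
  exists2 bs, 0 \notin bs & forall x, Pop D (0 :: bs) x = 0.
Proof.
move=> Hspan Heig.
have [bs nb Hbs] : exists2 bs, 0 \notin bs & forall e, e \in s -> exists2 b, b \in 0 :: bs & D e = b *: e.
  elim: s Heig {Hspan} => [|e s IH] Heig; first by exists [::].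
  have [|bs nb Hbs] := IH; first by move=> f fs; apply: Heig; rewrite inE fs orbT.
  have [a Ha] := Heig e (mem_head _ _).
  have [a0|an0] := eqVneq a 0.
    exists bs => // f; rewrite inE => /orP[/eqP ->|/Hbs //].
    by exists 0; rewrite ?inE ?eqxx // Ha a0.
  exists (a :: bs); first by rewrite inE negb_or nb eq_sym an0.
  move=> f; rewrite inE => /orP[/eqP ->|/Hbs [b Hb Hd]].
    by exists a; rewrite // !inE eqxx orbT.
  by exists b => //; move: Hb; rewrite !inE => /orP[->|->]; rewrite ?orbT.
exists bs; first exact: nb. move=> x.
have : x \in span (in_tuple s) by rewrite /= Hspan memvf.
move/coord_span => ->.
rewrite (linS (Pop_lin HD _)) big1 // => i _.
rewrite (linZ (Pop_lin HD _)).
have [b Hb Hd] := Hbs _ (mem_nth 0 (ltn_ord i)).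
by rewrite (Pop_eig HD Hd Hb) scaler0.
Qed.

Lemma brR (k : fieldType) (L : vectType k) (br : L -> L -> L) :
  is_lie_bracket br -> forall z (a : k) u v, br z (a *: u + v) = a *: br z u + br z v.
Proof. by case=> _ Hr _ _ z a u v; apply: Hr. Qed.

Lemma brL (k : fieldType) (L : vectType k) (br : L -> L -> L) :
  is_lie_bracket br -> forall z (a : k) u v, br (a *: u + v) z = a *: br u z + br v z.
Proof. by case=> Hl _ _ _ z a u v; apply: Hl. Qed.

Lemma diag_nil (k : fieldType) (L : vectType k) (br : L -> L -> L) :
  is_lie_bracket br -> forall y x, ad_split br y -> br y (br y x) = 0 -> br y x = 0.
Proof.
move=> Hb y x [s [Hs He]] Hz.
have [bs nb Hbs] := Pop_kill (brR Hb y) Hs He.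
apply: (Pop_nil (brR Hb y) Hz nb).
by have := Hbs x; rewrite /= scale0r subr0.
Qed.

Lemma toral_abelian (k : fieldType) (L : vectType k) (br : L -> L -> L) :
  is_lie_bracket br -> forall T : {vspace L}, split_toral br T ->
  forall x y, x \in T -> y \in T -> br x y = 0.
Proof.
move=> Hb T [Hsub Hspl] x y xT yT.
have claim : forall w a, w \in T -> br x w = a *: w -> a = 0 \/ w = 0.
  move=> w a wT Hw.
  have [a0|an0] := eqVneq a 0; first by left.
  have [w0|wn0] := eqVneq w 0; first by right.
  exfalso.
  have Hwx : br w x = - (a *: w) by rewrite (br_anti Hb) Hw.
  have : br w x = 0.
    apply: (diag_nil Hb (Hspl w wT)).
    rewrite Hwx (linN (brR Hb w)) (linZ (brR Hb w)).
    by case: Hb => _ _ -> _; rewrite scaler0 oppr0.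
  rewrite Hwx => /eqP; rewrite oppr_eq0 scaler_eq0 (negPf an0) (negPf wn0).
  by [].
have [s [Hs He]] := Hspl x xT.
have [bs nb Hbs] := Pop_kill (brR Hb x) Hs He.
have HP : Pop (br x) bs (br x y) = 0 by have := Hbs y; rewrite /= scale0r subr0.
have [//|xyn0] := eqVneq (br x y) 0.
have HQ : forall c w, w \in T -> br x w - c *: w \in T.
  by move=> c w wT; rewrite memvB ?memvZ // Hsub.
have [w' [w'T w'n0] [c Hc Hd]] := Pop_extract HQ (Hsub _ _ xT yT) xyn0 HP.
case: (claim w' c w'T Hd) => [c0|w0]; last by rewrite w0 eqxx in w'n0.
by rewrite c0 (negPf nb) in Hc.
Qed.

Lemma simple_part (k : fieldType) (L : vectType k) (br : L -> L -> L) :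
  is_lie_bracket br -> lie_reductive br -> ~ lie_abelian br -> lie_CA br ->
  forall I : {vspace L}, lie_ideal br I -> I = 0%VS \/ I = fullv.
Proof.
move=> Hb Hred Hna Hca I HI.
have [I0|In0] := eqVneq I 0%VS; first by left.
have [If|Inf] := eqVneq I fullv; first by right.
exfalso; have [J [HJ HIJ HcapIJ]] := Hred I HI.
have comm : forall u v, u \in I -> v \in J -> br u v = 0.
  move=> u v uI vJ; apply/eqP; rewrite -memv0 -HcapIJ memv_cap HJ //.
  by rewrite (br_anti Hb) memvN HI.
have Jn0 : J != 0%VS.
  by apply: contraNneq Inf => J0; rewrite -HIJ J0 addv0.
set x := vpick I; set y := vpick J.
have xI : x \in I by exact: memv_pick.
have yJ : y \in J by exact: memv_pick.
have xn0 : x != 0 by rewrite vpick0.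
have yn0 : y != 0 by rewrite vpick0.
have Jab : forall u v, u \in J -> v \in J -> br u v = 0.
  by move=> u v uJ vJ; apply: (Hca x xn0); apply: comm.
have Iab : forall u v, u \in I -> v \in I -> br u v = 0.
  move=> u v uI vI; apply: (Hca y yn0).
    by rewrite (br_anti Hb) comm ?oppr0.
  by rewrite (br_anti Hb) comm ?oppr0.
apply: Hna => a b.
have : a \in (I + J)%VS by rewrite HIJ memvf.
have : b \in (I + J)%VS by rewrite HIJ memvf.
move=> /memv_addP[b1 b1I [b2 b2J ->]] /memv_addP[a1 a1I [a2 a2J ->]].
rewrite (linD (brL Hb _)) !(linD (brR Hb _)).
rewrite (Iab a1 b1) // (Jab a2 b2) // (comm a1 b2) // [br a2 b1](br_anti Hb) (comm b1 a2) //.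
by rewrite oppr0 !addr0.
Qed.

Lemma rank_part (k : fieldType) (L : vectType k) (br : L -> L -> L) :
  is_lie_bracket br -> ~ lie_abelian br -> lie_CA br ->
  forall T : {vspace L}, split_toral br T -> (\dim T <= 1)%N.
Proof.
move=> Hb Hna Hca T HT.
rewrite leqNgt; apply/negP => HdT.
have Tn0 : T != 0%VS by rewrite -dimv_eq0 -lt0n (ltn_trans _ HdT).
set t := vpick T.
have tT : t \in T by exact: memv_pick.
have tn0 : t != 0 by rewrite vpick0.
have : ~~ (T <= <[t]>)%VS.
  apply/negP => /dimvS; rewrite dim_vline tn0 => H.
  by move: HdT; rewrite ltnNge H.
move=> /subvPn [s sT snt].
have Hts : br t s = 0 by apply: (toral_abelian Hb HT).
have Hst : br s t = 0 by rewrite (br_anti Hb) Hts oppr0.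
have Htt : br t t = 0 by case: Hb => _ _ -> _.
have [st [Hspan He]] := HT.2 t tT.
have key : forall e, e \in st -> br t e = 0.
  move=> e /He [a Ha].
  have [a0|an0] := eqVneq a 0; first by rewrite Ha a0 scale0r.
  have [e0|en0] := eqVneq e 0; first by rewrite Ha e0 scaler0.
  exfalso.
  have [ss [Hss Hes]] := HT.2 s sT.
  have [bs nb Hbs] := Pop_kill (brR Hb s) Hss Hes.
  have HQ : forall c w, br t w = a *: w -> br t (br s w - c *: w) = a *: (br s w - c *: w).
    move=> c w Hw.
    have Hjac : br t (br s w) = br s (br t w).
      case: (Hb) => _ _ _ Hj.
      have := Hj t s w; rewrite Hts.
      rewrite (lin0 (brR Hb w)) addr0 [br w t](br_anti Hb) (linN (brR Hb s)).
      by move/eqP; rewrite subr_eq0 => /eqP.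
    rewrite (linB (brR Hb t)) Hjac Hw (linZ (brR Hb s)) (linZ (brR Hb t)) Hw.
    by rewrite scalerBr !scalerA mulrC.
  have HP : Pop (br s) (0 :: bs) e = 0 by apply: Hbs.
  have [w [Hw wn0] [c _ Hc]] := Pop_extract HQ Ha en0 HP.
  set r := c *: t - a *: s.
  have rn0 : r != 0.
    apply/negP => /eqP r0; move/negP: snt; apply; apply/vlineP.
    exists (a^-1 * c); rewrite -scalerA; apply: (scalerI an0).
    rewrite !scalerA mulrA mulfV // mul1r; apply/eqP; rewrite eq_sym -subr_eq0.
    by rewrite -/r r0.
  have Hrw : br r w = 0.
    rewrite (linB (brL Hb w)) (linZ (brL Hb w)) (linZ (brL Hb w)) Hw Hc.
    by rewrite !scalerA mulrC subrr.
  have Hrt : br r t = 0.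
    by rewrite (linB (brL Hb t)) (linZ (brL Hb t)) (linZ (brL Hb t)) Htt Hst !scaler0 subrr.
  have := Hca r rn0 w t Hrw Hrt.
  rewrite (br_anti Hb) Hw => /eqP; rewrite oppr_eq0 scaler_eq0 (negPf an0) (negPf wn0).
  by [].
have Hall : forall x, br t x = 0.
  move=> x.
  have : x \in span (in_tuple st) by rewrite /= Hspan memvf.
  move/coord_span => ->.
  rewrite (linS (brR Hb t)) big1 // => i _.
  by rewrite (linZ (brR Hb t)) key ?scaler0 // mem_nth.
by apply: Hna => y z; apply: (Hca t tn0).
Qed.

Theorem lemma2p4 (p : nat) (k : fieldType) (L : vectType k) (br : L -> L -> L) :
  prime p -> finite_ext_Qp p k ->
  is_lie_bracket br -> lie_reductive br -> ~ lie_abelian br -> lie_CA br ->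
  lie_simple br /\ krank_le1 br.
Proof.
move=> _ _ Hb Hred Hna Hca; split.
  by split => //; apply: simple_part.
by move=> T [HT _]; apply: (rank_part Hb Hna Hca HT).
Qed.
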